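(* Let $H\in\mathbb{C}^{2N\times2N}$ be Hermitian and let $\mathbb{K}$ be the kernel of $H_\ominus$. Then $\mathbb{K}$ is $J$-invariant, $\dim\mathbb{K}=2l$ is even, $\mathbb{K}$ admits an orthogonal basis $\mathbf{y}_1,\dots,\mathbf{y}_{2l}$ of nonzero vectors with $J(\mathbf{y}_k)=\mathbf{y}_k$ for all $k$, and $\mathbb{K}$ admits an orthonormal basis of the form $\{\mathbf{k}'_1,\dots,\mathbf{k}'_l,J(\mathbf{k}'_1),\dots,J(\mathbf{k}'_l)\}$. Consequently $\mathbb{C}^{2N}$ has an orthonormal basis of eigenvectors of $H_\ominus$ of the form $\{\mathbf{x}_1,\dots,\mathbf{x}_N,J(\mathbf{x}_1),\dots,J(\mathbf{x}_N)\}$ in which every $\mathbf{x}_j$ has eigenvalue $\le 0$.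
   Context: $\Omega=\begin{pmatrix}0&I_N\\ I_N&0\end{pmatrix}\in\mathbb{C}^{2N\times2N}$. $J:\mathbb{C}^{2N}\to\mathbb{C}^{2N}$ is the antilinear map $J(\mathbf{x})=\Omega\mathbf{x}^*$ ($^*$ = entrywise complex conjugation). For a matrix $M$, $M_\ominus:=\tfrac12(M-\Omega M^{\mathrm T}\Omega)$. $\langle\mathbf{x},\mathbf{y}\rangle=\sum_k x_k^*y_k$. *)

(* Defs.v *)
(* Complex numbers C^{2N} are modelled as column vectors
   'cV[R[i]]_(N + N) over the complex numbers R[i] = complex R of an
   arbitrary realType R (i.e. the real numbers), from mathcomp-real-closed. *)
From HB Require Import structures.
From mathcomp Require Import all_boot all_order all_algebra.
From mathcomp Require Import reals complex.
Set Implicit Arguments.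
Unset Strict Implicit.
Unset Printing Implicit Defensive.
Import Order.TTheory GRing.Theory Num.Theory.
Local Open Scope ring_scope.

Section Defs.
Variable C : numClosedFieldType.
Variable N : nat.

Definition Omega : 'M[C]_(N + N) := block_mx 0 1%:M 1%:M 0.

Definition conjv (x : 'cV[C]_(N + N)) : 'cV[C]_(N + N) := map_mx Num.conj x.

Definition Jmap (x : 'cV[C]_(N + N)) : 'cV[C]_(N + N) := Omega *m conjv x.

Definition ominus (M : 'M[C]_(N + N)) : 'M[C]_(N + N) :=
  2^-1 *: (M - Omega *m M^T *m Omega).

Definition dotc (x y : 'cV[C]_(N + N)) : C :=
  \sum_(k < N + N) (x k 0)^* * y k 0.

Definition hermitian_mx (H : 'M[C]_(N + N)) : Prop := (map_mx Num.conj H)^T = H.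

Definition in_ker (A : 'M[C]_(N + N)) (x : 'cV[C]_(N + N)) : Prop := A *m x = 0.

(* the kernel of A, as a row space of transposed (column) vectors:
   its rows span { x^T | A x = 0 }, so its rank is dim ker A *)
Definition kerc (A : 'M[C]_(N + N)) : 'M[C]_(N + N) := kermx A^T.

Definition Jpair (l : nat) (k : 'I_l -> 'cV[C]_(N + N)) (i : 'I_(l + l))
  : 'cV[C]_(N + N) :=
  match split i with inl a => k a | inr b => Jmap (k b) end.

Definition spans (m : nat) (v : 'I_m -> 'cV[C]_(N + N))
  (S : 'cV[C]_(N + N) -> Prop) : Prop :=
  forall x, S x -> exists c : 'I_m -> C, x = \sum_(i < m) c i *: v i.

Definition is_basis (m : nat) (v : 'I_m -> 'cV[C]_(N + N))
  (S : 'cV[C]_(N + N) -> Prop) : Prop :=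
  [/\ forall i, S (v i),
      (forall c : 'I_m -> C, \sum_(i < m) c i *: v i = 0 -> forall i, c i = 0)
    & spans v S].

Definition orthogonal_fam (m : nat) (v : 'I_m -> 'cV[C]_(N + N)) : Prop :=
  forall i j, i != j -> dotc (v i) (v j) = 0.

Definition orthonormal_fam (m : nat) (v : 'I_m -> 'cV[C]_(N + N)) : Prop :=
  forall i j, dotc (v i) (v j) = (i == j)%:R.

End Defs.

(* Main.v *)
Require Import Defs.
From HB Require Import structures.
From mathcomp Require Import all_boot all_order all_algebra.
From mathcomp Require Import reals complex zify.
Import Order.TTheory GRing.Theory Num.Theory.
Local Open Scope ring_scope.
Set Implicit Arguments.
Unset Strict Implicit.
Unset Printing Implicit Defensive.

Section Basics.
Variable C : numClosedFieldType.
Variable N : nat.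
Local Notation V := 'cV[C]_(N + N).
Local Notation Om := (Omega C N).
Local Notation J := (@Jmap C N).
Local Notation dot := (@dotc C N).
Implicit Types x y z : V.

Lemma dotcDr x y z : dot x (y + z) = dot x y + dot x z.
Proof. by rewrite /dotc -big_split /=; apply: eq_bigr => k _; rewrite mxE mulrDr. Qed.
Lemma dotcZr x c y : dot x (c *: y) = c * dot x y.
Proof. by rewrite /dotc mulr_sumr; apply: eq_bigr => k _; rewrite mxE mulrCA. Qed.
Lemma dotcDl x y z : dot (x + y) z = dot x z + dot y z.
Proof. by rewrite /dotc -big_split /=; apply: eq_bigr => k _; rewrite mxE rmorphD mulrDl. Qed.
Lemma dotcZl x c y : dot (c *: x) y = c^* * dot x y.
Proof. by rewrite /dotc mulr_sumr; apply: eq_bigr => k _; rewrite mxE rmorphM mulrA. Qed.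
Lemma dotcC x y : dot y x = (dot x y)^*.
Proof. by rewrite /dotc rmorph_sum; apply: eq_bigr => k _; rewrite rmorphM /= conjCK mulrC. Qed.
Lemma dotc0r x : dot x 0 = 0.
Proof. by rewrite /dotc big1 // => k _; rewrite mxE mulr0. Qed.
Lemma dotc0l x : dot 0 x = 0.
Proof. by rewrite /dotc big1 // => k _; rewrite mxE rmorph0 mul0r. Qed.
Lemma dotcNr x y : dot x (- y) = - dot x y.
Proof. by rewrite -scaleN1r dotcZr mulN1r. Qed.
Lemma dotcNl x y : dot (- x) y = - dot x y.
Proof. by rewrite -scaleN1r dotcZl rmorphN1 mulN1r. Qed.
Lemma dotcBr x y z : dot x (y - z) = dot x y - dot x z.
Proof. by rewrite dotcDr dotcNr. Qed.
Lemma dotcBl x y z : dot (x - y) z = dot x z - dot y z.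
Proof. by rewrite dotcDl dotcNl. Qed.
Lemma dotc_sumr I (r : seq I) (P : pred I) x (f : I -> V) :
  dot x (\sum_(i <- r | P i) f i) = \sum_(i <- r | P i) dot x (f i).
Proof. exact: (big_morph _ (dotcDr x) (dotc0r x)). Qed.
Lemma dotc_suml I (r : seq I) (P : pred I) x (f : I -> V) :
  dot (\sum_(i <- r | P i) f i) x = \sum_(i <- r | P i) dot (f i) x.
Proof. exact: (big_morph (fun v => dot v x) (fun a b => dotcDl a b x) (dotc0l x)). Qed.

Lemma dotc_ge0 x : 0 <= dot x x.
Proof. by apply: sumr_ge0 => k _; rewrite mulrC mul_conjC_ge0. Qed.
Lemma dotc_eq0 x : (dot x x == 0) = (x == 0).
Proof.
apply/idP/idP => [/eqP|/eqP->]; last by rewrite dotc0r.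
move/eqP; rewrite psumr_eq0 => [/allP H|k _]; last by rewrite mulrC mul_conjC_ge0.
apply/eqP/matrixP => i j; rewrite ord1 mxE.
have := H i (mem_index_enum _); rewrite mulrC mul_conjC_eq0 => /eqP ->//.
Qed.
Lemma dotc_real x : dot x x \is Num.real.
Proof. by rewrite realE dotc_ge0. Qed.

Lemma dotc_mulmx (M : 'M[C]_(N + N)) x y :
  dot (M *m x) y = dot x ((map_mx Num.conj M)^T *m y).
Proof.
rewrite /dotc.
under eq_bigr do rewrite !mxE rmorph_sum mulr_suml.
under [RHS]eq_bigr do rewrite !mxE mulr_sumr.
rewrite exchange_big /=; apply: eq_bigr => i _; apply: eq_bigr => j _.
by rewrite !mxE rmorphM mulrA [_ * _^*]mulrC.
Qed.

Lemma OmegaT : Om^T = Om.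
Proof. by rewrite /Omega tr_block_mx !trmx0 !trmx1. Qed.
Lemma Omega_conj : map_mx Num.conj Om = Om.
Proof.
rewrite /Omega map_block_mx map_mx0.
suff -> : map_mx Num.conj (1%:M : 'M[C]_N) = 1%:M by [].
by apply/matrixP => i j; rewrite !mxE; case: (i == j); rewrite /= ?conjC1 ?conjC0.
Qed.
Lemma OmegaK : Om *m Om = 1%:M.
Proof.
rewrite /Omega mulmx_block !mulmx0 !mul0mx !mulmx1 !addr0 !add0r.
by rewrite -scalar_mx_block.
Qed.
Lemma conjv_mul (M : 'M[C]_(N + N)) x :
  conjv (M *m x) = map_mx Num.conj M *m conjv x.
Proof. by rewrite /conjv map_mxM. Qed.
Lemma conjvK x : conjv (conjv x) = x.
Proof. by apply/matrixP => i j; rewrite !mxE conjCK. Qed.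
Lemma conjvD x y : conjv (x + y) = conjv x + conjv y.
Proof. by apply/matrixP => i j; rewrite !mxE rmorphD. Qed.
Lemma conjvZ c x : conjv (c *: x) = c^* *: conjv x.
Proof. by apply/matrixP => i j; rewrite !mxE rmorphM. Qed.

Lemma JD x y : J (x + y) = J x + J y.
Proof. by rewrite /Jmap conjvD mulmxDr. Qed.
Lemma JZ c x : J (c *: x) = c^* *: J x.
Proof. by rewrite /Jmap conjvZ scalemxAr. Qed.
Lemma JN x : J (- x) = - J x.
Proof. by rewrite -scaleN1r JZ rmorphN1 scaleN1r. Qed.
Lemma JB x y : J (x - y) = J x - J y.
Proof. by rewrite JD JN. Qed.
Lemma J0 : J 0 = 0.
Proof. by rewrite /Jmap /conjv map_mx0 mulmx0. Qed.
Lemma JK x : J (J x) = x.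
Proof. by rewrite /Jmap conjv_mul conjvK Omega_conj mulmxA OmegaK mul1mx. Qed.
Lemma dotcJ x y : dot (J x) (J y) = dot y x.
Proof.
rewrite /Jmap dotc_mulmx Omega_conj OmegaT mulmxA OmegaK mul1mx.
rewrite /dotc; apply: eq_bigr => k _.
by rewrite !mxE conjCK mulrC.
Qed.
Lemma J_eq0 x : (J x == 0) = (x == 0).
Proof.
apply/idP/idP => /eqP H; apply/eqP; last by rewrite H J0.
by rewrite -(JK x) H J0.
Qed.

End Basics.
Section Herm.
Variable C : numClosedFieldType.
Variable N : nat.
Local Notation V := 'cV[C]_(N + N).
Local Notation Om := (Omega C N).
Local Notation J := (@Jmap C N).
Local Notation dot := (@dotc C N).
Implicit Types x y z : V.
Variable H : 'M[C]_(N + N).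
Hypothesis hH : hermitian_mx H.

Lemma conj_half : (2^-1 : C)^* = 2^-1.
Proof. by rewrite fmorphV /= conj_Creal // realn. Qed.

Lemma conjH : map_mx Num.conj H = H^T.
Proof. by rewrite -[in RHS]hH trmxK. Qed.

Lemma conj_ominus : map_mx Num.conj (ominus H) = 2^-1 *: (H^T - Om *m H *m Om).
Proof.
rewrite /ominus map_mxZ map_mxB !map_mxM Omega_conj -map_trmx conjH trmxK.
by rewrite -[X in X *: _ = _]/((2^-1 : C)^*) conj_half.
Qed.

Lemma herm_ominus : hermitian_mx (ominus H).
Proof.
rewrite /hermitian_mx conj_ominus linearZ /= linearB /= !trmx_mul OmegaT trmxK.
by rewrite /ominus mulmxA.
Qed.

Lemma ominus_Omega : ominus H *m Om = - (Om *m map_mx Num.conj (ominus H)).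
Proof.
rewrite conj_ominus /ominus -scalemxAl -scalemxAr -scalerN; congr (_ *: _).
rewrite mulmxBl mulmxBr opprB -!mulmxA OmegaK mulmx1 !mulmxA OmegaK mul1mx.
by [].
Qed.

Lemma ominus_J x : ominus H *m J x = - J (ominus H *m x).
Proof.
by rewrite /Jmap mulmxA ominus_Omega conjv_mul mulNmx mulmxA.
Qed.

Lemma dotc_herm (A : 'M[C]_(N + N)) x y : hermitian_mx A ->
  dot (A *m x) y = dot x (A *m y).
Proof. by move=> hA; rewrite dotc_mulmx hA. Qed.

End Herm.
Section Orth.
Local Open Scope sesquilinear_scope.
Variable C : numClosedFieldType.
Variable N : nat.
Local Notation V := 'cV[C]_(N + N).
Local Notation J := (@Jmap C N).
Local Notation dot := (@dotc C N).
Implicit Types x y z : V.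

Definition famU m (v : 'I_m -> V) : 'M[C]_(m, N + N) :=
  \matrix_(i, j) ((v i) j 0)^*.

Lemma famU_unitary m (v : 'I_m -> V) : orthonormal_fam v -> famU v \is unitarymx.
Proof.
move=> ov; apply/unitarymxP/matrixP => i k; rewrite !mxE -ov /dotc.
by apply: eq_bigr => j _; rewrite !mxE conjCK.
Qed.

Lemma ortho_size m (v : 'I_m -> V) : orthonormal_fam v -> (m <= N + N)%N.
Proof.
move=> /famU_unitary/mxrank_unitary <-; exact: rank_leq_col.
Qed.

Lemma ortho_expand (v : 'I_(N + N) -> V) : orthonormal_fam v ->
  forall x, x = \sum_(i < N + N) dot (v i) x *: v i.
Proof.
move=> /famU_unitary /unitarymxP /mulmx1C H x.
have E j j' : \sum_(i < N + N) v i j 0 * (v i j' 0)^* = (j == j')%:R.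
  have := congr1 (fun M : 'M[C]_(N + N) => M j j') H; rewrite /= !mxE => <-.
  by apply: eq_bigr => i _; rewrite !mxE conjCK.
apply/matrixP => j k; rewrite ord1 summxE.
have -> : x j 0 = \sum_(j' < N + N) (\sum_(i < N + N) v i j 0 * (v i j' 0)^*) * x j' 0.
  rewrite (eq_bigr (fun j' => (j == j')%:R * x j' 0)); last by move=> j' _; rewrite E.
  rewrite (bigD1 j) //= big1 => [|j' /negPf nj]; first by rewrite eqxx mul1r addr0.
  by rewrite eq_sym nj mul0r.
rewrite (eq_bigr (fun j' => \sum_(i < N + N) v i j 0 * (v i j' 0)^* * x j' 0)); last first.
  by move=> j' _; rewrite mulr_suml.
rewrite exchange_big /=; apply: eq_bigr => i _.
rewrite mxE /dotc mulr_suml; apply: eq_bigr => j' _.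
by rewrite [RHS]mulrC mulrA.
Qed.

Lemma orthog_indep m (v : 'I_m -> V) : orthogonal_fam v -> (forall i, v i != 0) ->
  forall c : 'I_m -> C, \sum_(i < m) c i *: v i = 0 -> forall i, c i = 0.
Proof.
move=> ov nz c H i.
have := congr1 (dot (v i)) H; rewrite dotc0r dotc_sumr (bigD1 i) //= big1.
  by rewrite addr0 dotcZr => /eqP; rewrite mulf_eq0 dotc_eq0 (negPf (nz i)) orbF => /eqP.
by move=> k nk; rewrite dotcZr ov ?mulr0 // eq_sym.
Qed.

Lemma orthon_orthog m (v : 'I_m -> V) : orthonormal_fam v ->
  orthogonal_fam v /\ (forall i, v i != 0).
Proof.
move=> ov; split => [i j nij|i]; first by rewrite ov (negPf nij).
by rewrite -dotc_eq0 ov eqxx oner_eq0.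
Qed.

Definition orth (s : seq V) :=
  uniq s /\ {in s &, forall u v, dot u v = (u == v)%:R}.
Definition perp (s : seq V) z := forall u, u \in s -> dot u z = 0.

Lemma orth_perm s t : perm_eq s t -> orth s -> orth t.
Proof.
move=> st [us os]; split; first by rewrite -(perm_uniq st).
by move=> u v; rewrite -!(perm_mem st); exact: os.
Qed.

Lemma orth_cons s z : orth s -> dot z z = 1 -> perp s z -> orth (z :: s).
Proof.
move=> [us os] zz pz; split.
  rewrite /= us andbT; apply/negP => zs.
  by move: (pz z zs); rewrite zz => /eqP; rewrite oner_eq0.
move=> u v; rewrite !inE => /predU1P[->|us'] /predU1P[->|vs'].
- by rewrite zz eqxx.
- rewrite dotcC (pz v vs') conjC0; case: eqP => // zv; move: (pz v vs'); rewrite -zv zz.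
  by move/eqP; rewrite oner_eq0.
- rewrite (pz u us'); case: eqP => // uz; move: (pz u us'); rewrite uz zz.
  by move/eqP; rewrite oner_eq0.
- exact: os.
Qed.

Lemma orth_subseq s t : subseq s t -> orth t -> orth s.
Proof.
move=> st [ut ot]; split; first exact: subseq_uniq ut.
by move=> u v us vs; apply: ot; apply: (mem_subseq st).
Qed.

Lemma orth_fam s m (e : size s = m) : orth s ->
  orthonormal_fam (fun i : 'I_m => nth 0 s i).
Proof.
move=> [us os] i j; rewrite os ?mem_nth ?e //.
by rewrite nth_uniq ?e.
Qed.

Lemma orth_size s : orth s -> (size s <= N + N)%N.
Proof. by move=> /(orth_fam (erefl _)) /ortho_size. Qed.

Lemma orth_expand s : orth s -> size s = (N + N)%N ->
  forall x, x = \sum_(u <- s) dot u x *: u.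
Proof.
move=> os e x; rewrite {1}(ortho_expand (orth_fam e os) x).
rewrite (big_nth 0) big_mkord e; apply: eq_bigr => i _.
by [].
Qed.

Definition rowsM (s : seq V) : 'M[C]_(size s, N + N) :=
  \matrix_(i, j) ((nth 0 s i) j 0)^*.

Lemma perpP s (w : 'rV[C]_(N + N)) :
  (w <= kermx (rowsM s)^T)%MS <-> perp s w^T.
Proof.
have E i : (w *m (rowsM s)^T) 0 i = dot (nth 0 s i) w^T.
  by rewrite !mxE /dotc; apply: eq_bigr => j _; rewrite !mxE mulrC.
split.
  move/sub_kermxP => H u /(nthP 0) [i lti <-].
  by rewrite -(E (Ordinal lti)) H mxE.
move=> H; apply/sub_kermxP/matrixP => k i; rewrite ord1 E mxE H //.
exact: mem_nth.
Qed.

Lemma exists_eig (A : 'M[C]_(N + N)) (s : seq V) :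
  (forall z, perp s z -> perp s (A *m z)) -> (size s < N + N)%N ->
  exists z a, [/\ z != 0, perp s z & A *m z = a *: z].
Proof.
move=> stab lts.
set Sm := kermx (rowsM s)^T.
have rSm : (0 < \rank Sm)%N.
  rewrite mxrank_ker mxrank_tr subn_gt0.
  exact: leq_ltn_trans (rank_leq_row _) lts.
have stS : stablemx Sm A^T.
  apply/row_subP => i; rewrite row_mul; apply/perpP.
  rewrite trmx_mul (trmxK A); apply: stab; apply/perpP; exact: row_sub.
set B := row_base Sm.
have stB : stablemx B A^T by rewrite stablemx_row_base.
have [a /eigenvalueP [u uE unz]] := eigenvalue_closed (conjmx B A^T) rSm.
have : (u <= eigenspace (conjmx B A^T) a)%MS by apply/eigenspaceP.
rewrite sub_eigenspace_conjmx ?row_base_free // => /eigenspaceP wE.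
exists (u *m B)^T, a; split.
- by rewrite trmx_eq0 mulmx_free_eq0 ?row_base_free.
- apply/perpP; apply: submx_trans (submxMl u B) _; by rewrite eq_row_base.
- by rewrite -[A]trmxK -trmx_mul wE linearZ.
Qed.

End Orth.
Section Main.
Variable C : numClosedFieldType.
Variable N : nat.
Local Notation V := 'cV[C]_(N + N).
Local Notation J := (@Jmap C N).
Local Notation dot := (@dotc C N).
Implicit Types x y z w : V.
Variable H : 'M[C]_(N + N).
Hypothesis hH : hermitian_mx H.
Local Notation A := (ominus H).

Lemma Aherm x y : dot (A *m x) y = dot x (A *m y).
Proof. exact/dotc_herm/herm_ominus. Qed.

Lemma eig_real z a : z != 0 -> A *m z = a *: z -> a^* = a.
Proof.
move=> nz E; have := Aherm z z; rewrite E dotcZl dotcZr => /eqP.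
rewrite -subr_eq0 -mulrBl mulf_eq0 dotc_eq0 (negPf nz) orbF subr_eq0.
by move/eqP.
Qed.

Lemma AJeig x a : A *m x = a *: x -> A *m J x = (- a^*) *: J x.
Proof. by move=> E; rewrite ominus_J // E JZ scaleNr. Qed.

Definition nzc w : C := (sqrtC (dot w w))^-1.
Definition nz w : V := nzc w *: w.

Lemma nzc_conj w : (nzc w)^* = nzc w.
Proof. by rewrite conj_Creal // realV sqrtC_real // dotc_ge0. Qed.

Lemma nz_unit w : w != 0 -> dot (nz w) (nz w) = 1.
Proof.
move=> wn; rewrite /nz dotcZl dotcZr nzc_conj /nzc.
have r0 : sqrtC (dot w w) != 0 by rewrite sqrtC_eq0 dotc_eq0.
by rewrite -{3}(sqrtCK (dot w w)) expr2 mulKf // mulVf.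
Qed.

Lemma J_nz w : J (nz w) = nz (J w).
Proof. by rewrite /nz JZ nzc_conj /nzc dotcJ. Qed.

Lemma nz_neq0 w : w != 0 -> nz w != 0.
Proof. by move=> wn; rewrite -dotc_eq0 nz_unit // oner_eq0. Qed.

Lemma perpZ s c z : perp s z -> perp s (c *: z).
Proof. by move=> pz u us; rewrite dotcZr pz // mulr0. Qed.
Lemma perpD s y z : perp s y -> perp s z -> perp s (y + z).
Proof. by move=> py pz u us; rewrite dotcDr py // pz // addr0. Qed.

Definition fam (Qn Qk O : seq V) := Qn ++ map J Qn ++ Qk ++ map J Qk ++ O.

Definition Inv (Qn Qk O : seq V) :=
  [/\ orth (fam Qn Qk O),
      {in Qn, forall x, exists2 lam : C, lam < 0 & A *m x = lam *: x},
      {in Qk, forall x, A *m x = 0},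
      {in O, forall x, A *m x = 0 /\ J x = x} &
      (size O <= 1)%N].

Lemma fam_eig Qn Qk O u : Inv Qn Qk O -> u \in fam Qn Qk O ->
  exists mu, A *m u = mu *: u.
Proof.
case=> _ hn hk ho _; rewrite !mem_cat.
case/orP => [h|/orP[/mapP[x h ->]|/orP[h|/orP[/mapP[x h ->]|h]]]].
- by have [lam _ E] := hn u h; exists lam.
- by have [lam _ E] := hn x h; exists (- lam^*); exact: AJeig.
- by exists 0; rewrite scale0r hk.
- by exists 0; rewrite scale0r ominus_J // hk // J0 oppr0.
- by exists 0; rewrite scale0r; case: (ho u h).
Qed.

Lemma fam_J Qn Qk O u : Inv Qn Qk O -> u \in fam Qn Qk O -> J u \in fam Qn Qk O.
Proof.
case=> _ hn hk ho _; rewrite !mem_cat.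
case/orP => [h|/orP[/mapP[x h ->]|/orP[h|/orP[/mapP[x h ->]|h]]]].
- by rewrite (map_f J h) orbT.
- by rewrite JK h.
- by rewrite (map_f J h) !orbT.
- by rewrite JK h !orbT.
- by case: (ho u h) => _ ->; rewrite h !orbT.
Qed.

Lemma perp_stab Qn Qk O z : Inv Qn Qk O -> perp (fam Qn Qk O) z ->
  perp (fam Qn Qk O) (A *m z) /\ perp (fam Qn Qk O) (J z).
Proof.
move=> I pz; split => u us.
  have [mu E] := fam_eig I us.
  by rewrite -Aherm E dotcZl pz // mulr0.
by rewrite -(JK u) dotcJ dotcC pz ?conjC0 // fam_J.
Qed.


Lemma count_cons' (T : Type) (p : pred T) (x : T) s : count p (x :: s) = (p x + count p s)%N.
Proof. by []. Qed.
Ltac perm_tac := apply/permP => ?; rewrite ?map_cons; repeat rewrite !(count_cat, count_cons'); rewrite ?addn0; lia.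

Definition base (Qn Qk : seq V) := Qn ++ map J Qn ++ Qk ++ map J Qk.
Lemma famE Qn Qk O : fam Qn Qk O = base Qn Qk ++ O.
Proof. by rewrite /fam /base !catA. Qed.

Lemma step_neg Qn Qk O x0 b : Inv Qn Qk O -> x0 != 0 ->
  perp (fam Qn Qk O) x0 -> b < 0 -> A *m x0 = b *: x0 ->
  Inv (nz x0 :: Qn) Qk O.
Proof.
move=> I x0n px0 hb Ax0; have [o hn hk ho hs] := I.
set x := nz x0.
have hbc : b^* = b := eig_real x0n Ax0.
have Ax : A *m x = b *: x by rewrite /x /nz -scalemxAr Ax0 !scalerA mulrC.
have px : perp (fam Qn Qk O) x := perpZ _ px0.
have xx : dot x x = 1 by apply: nz_unit.
clearbody x.
have AJx : A *m J x = (- b) *: J x.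
  by have := AJeig Ax; rewrite hbc.
have pJx : perp (fam Qn Qk O) (J x) by case: (perp_stab I px).
have dJ : dot (J x) x = 0.
  have := Aherm (J x) x; rewrite AJx Ax dotcZl dotcZr rmorphN /= hbc => /eqP.
  rewrite -subr_eq0 -mulrBl mulf_eq0 => /orP [|/eqP //].
  rewrite -opprD oppr_eq0 => /eqP bb.
  have : b + b < 0 by rewrite -[0]addr0 ltrD.
  by rewrite bb ltxx.
split => //.
- apply: (@orth_perm _ _ (x :: J x :: fam Qn Qk O)); first by rewrite /fam /=; perm_tac.
  have oJ : orth (J x :: fam Qn Qk O) by apply: orth_cons => //; rewrite dotcJ.
  apply: orth_cons => //.
  by move=> u; rewrite inE => /predU1P [->|us] //; exact: px.
- move=> u; rewrite inE => /predU1P [->|us]; last exact: hn.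
  by exists b.
Qed.

Lemma step_fix0 Qn Qk f : Inv Qn Qk [::] -> dot f f = 1 ->
  perp (fam Qn Qk [::]) f -> A *m f = 0 -> J f = f -> Inv Qn Qk [:: f].
Proof.
move=> [o hn hk ho hs] ff pf Af Jf; split => //.
- apply: (@orth_perm _ _ (f :: fam Qn Qk [::])); first by rewrite !famE /=; perm_tac.
  exact: orth_cons.
- by move=> u; rewrite inE => /eqP ->.
Qed.

Lemma step_fix1 Qn Qk g f : Inv Qn Qk [:: g] -> dot f f = 1 ->
  perp (fam Qn Qk [:: g]) f -> A *m f = 0 -> J f = f ->
  Inv Qn (nz (g + 'i *: f) :: Qk) [::].
Proof.
move=> I ff pf Af Jf; have [o hn hk ho hs] := I.
have [Ag Jg] : A *m g = 0 /\ J g = g by apply: ho; rewrite inE.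
have gfam : g \in fam Qn Qk [:: g] by rewrite famE mem_cat inE eqxx orbT.
have gg : dot g g = 1 by case: o => _ o; rewrite o ?eqxx.
have gf : dot g f = 0 by apply: pf.
have fg : dot f g = 0 by rewrite dotcC gf conjC0.
have ob : orth (base Qn Qk) by apply: orth_subseq o; rewrite famE prefix_subseq.
have pg : perp (base Qn Qk) g.
  move=> u ub; case: o => uo o.
  have uf : u \in fam Qn Qk [:: g] by rewrite famE mem_cat ub.
  rewrite (o u g uf gfam); case: eqP => // ug; rewrite ug in ub.
  by move: uo; rewrite famE cat_uniq /= ub /= andbF.
have pf' : perp (base Qn Qk) f.
  by move=> v vb; apply: pf; rewrite famE mem_cat vb.
set w := g + 'i *: f.
have wn : w != 0.
  apply/eqP => w0; have := dotcDr g g ('i *: f); rewrite -/w w0 dotc0r dotcZr gf gg.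
  by rewrite mulr0 addr0 => /eqP; rewrite eq_sym oner_eq0.
have Jw : J w = g + (- 'i) *: f by rewrite /w JD JZ Jg Jf conjCi.
set k := nz w.
have Jk : J k = nzc w *: (g + (- 'i) *: f) by rewrite /k J_nz /nz /nzc dotcJ Jw.
have kk : dot k k = 1 by apply: nz_unit.
have kJk : dot k (J k) = 0.
  rewrite Jk /k /nz dotcZl dotcZr /w.
  rewrite !(dotcDl, dotcDr, dotcZl, dotcZr) gg gf fg ff conjCi.
  by rewrite !mulr0 !addr0 mulr1 mulrNN mulCii add0r addrN !mulr0.
have pk : perp (base Qn Qk) k.
  exact: (perpZ _ (perpD pg (perpZ _ pf'))).
have pJk : perp (base Qn Qk) (J k).
  rewrite Jk; exact: (perpZ _ (perpD pg (perpZ _ pf'))).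
have Ak : A *m k = 0 by rewrite /k /nz /w -scalemxAr mulmxDr -scalemxAr Ag Af !scaler0 addr0 scaler0.
split => //.
- apply: (@orth_perm _ _ (k :: J k :: base Qn Qk)); first by rewrite /fam /base /=; perm_tac.
  have oJ : orth (J k :: base Qn Qk) by apply: orth_cons => //; rewrite dotcJ.
  apply: orth_cons => //.
  move=> u; rewrite inE => /predU1P [->|us]; last exact: pk.
  by rewrite dotcC kJk conjC0.
- move=> u; rewrite inE => /predU1P [->|us]; last exact: hk.
  exact: Ak.
Qed.

Lemma size_fam Qn Qk O :
  size (fam Qn Qk O) = (size Qn + size Qn + size Qk + size Qk + size O)%N.
Proof. by rewrite /fam !size_cat !size_map; lia. Qed.

Lemma fix_vec Qn Qk O z : Inv Qn Qk O -> z != 0 -> perp (fam Qn Qk O) z ->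
  A *m z = 0 -> exists f, [/\ dot f f = 1, J f = f, A *m f = 0 & perp (fam Qn Qk O) f].
Proof.
move=> I zn pz Az.
have pJz : perp (fam Qn Qk O) (J z) by case: (perp_stab I pz).
have AJz : A *m J z = 0 by rewrite ominus_J // Az J0 oppr0.
suff [w [wn Jw Aw pw]] : exists w, [/\ w != 0, J w = w, A *m w = 0 & perp (fam Qn Qk O) w].
  exists (nz w); split.
  - exact: nz_unit.
  - by rewrite J_nz Jw.
  - by rewrite /nz -scalemxAr Aw scaler0.
  - exact: perpZ.
have [e|ne] := eqVneq (z + J z) 0; last first.
  exists (z + J z); split => //.
  - by rewrite JD JK addrC.
  - by rewrite mulmxDr Az AJz addr0.
  - exact: perpD.
exists ('i *: (z - J z)); split.
- rewrite scaler_eq0 negb_or; apply/andP; split.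
    by rewrite -normr_eq0 normCi oner_eq0.
  apply/eqP => e2; move/eqP: zn; apply.
  have : (z - J z) + (z + J z) = 0 by rewrite e e2 addr0.
  rewrite addrACA addNr addr0 -mulr2n -scaler_nat => /eqP.
  by rewrite scaler_eq0 pnatr_eq0 /= => /eqP.
- by rewrite JZ JB JK conjCi scaleNr -scalerN opprB.
- by rewrite -scalemxAr mulmxBr Az AJz subrr scaler0.
- by apply: perpZ; move=> u us; rewrite dotcBr pz // pJz // subr0.
Qed.

Lemma step Qn Qk O : Inv Qn Qk O -> (size (fam Qn Qk O) < N + N)%N ->
  exists Qn' Qk' O', Inv Qn' Qk' O' /\ (size (fam Qn Qk O) < size (fam Qn' Qk' O'))%N.
Proof.
move=> I lt.
have stab z : perp (fam Qn Qk O) z -> perp (fam Qn Qk O) (A *m z).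
  by move=> pz; case: (perp_stab I pz).
have [z [a [zn pz Az]]] := exists_eig stab lt.
have ar : a^* = a := eig_real zn Az.
have areal : a \is Num.real by rewrite CrealE ar.
have [o hn hk ho hs] := I.
case: (real_ltgt0P areal) => [apos|aneg|a0].
- exists (nz (J z) :: Qn), Qk, O; split.
    apply: (step_neg (b := - a)) => //.
    + by rewrite J_eq0.
    + by case: (perp_stab I pz).
    + by rewrite oppr_lt0.
    + by rewrite (AJeig Az) ar.
  by rewrite !size_fam /=; lia.
- exists (nz z :: Qn), Qk, O; split; first exact: (step_neg (b := a)).
  by rewrite !size_fam /=; lia.
- have Az0 : A *m z = 0 by rewrite Az a0 scale0r.
  have [f [ff Jf Af pf]] := fix_vec I zn pz Az0.
  case: O I hs pf ho {o hn hk lt stab pz} => [|g [|? ?]] //= I _ pf ho.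
    exists Qn, Qk, [:: f]; split; first exact: step_fix0.
    by rewrite !size_fam /=; lia.
  exists Qn, (nz (g + 'i *: f) :: Qk), [::]; split; first exact: step_fix1.
  by rewrite !size_fam /=; lia.
Qed.

Lemma reach k : (k <= N + N)%N ->
  exists Qn Qk O, Inv Qn Qk O /\ (k <= size (fam Qn Qk O))%N.
Proof.
elim: k => [_|k IH lk].
  exists [::], [::], [::]; split; last by [].
  rewrite /Inv /fam /=; split => //.
have [Qn [Qk [O [I le]]]] := IH (ltnW lk).
have [lt|ge] := ltnP k (size (fam Qn Qk O)).
  by exists Qn, Qk, O.
have e : size (fam Qn Qk O) = k by apply/eqP; rewrite eqn_leq ge le.
have ltN : (size (fam Qn Qk O) < N + N)%N by rewrite e.
have [Qn' [Qk' [O' [I' lt']]]] := step I ltN.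
by exists Qn', Qk', O'; split => //; rewrite -e.
Qed.

Lemma final_state : exists Qn Qk, Inv Qn Qk [::] /\
  (size Qn + size Qk = N)%N.
Proof.
have [Qn [Qk [O [I le]]]] := reach (leqnn (N + N)).
have [o hn hk ho hs] := I.
have ge := orth_size o.
move: le ge; rewrite size_fam => le ge.
have sO : size O = 0%N by lia.
move: I; rewrite (size0nil sO) => I.
by exists Qn, Qk; split => //; lia.
Qed.

End Main.

Section Final.
Variable C : numClosedFieldType.
Variable N : nat.
Local Notation V := 'cV[C]_(N + N).
Local Notation J := (@Jmap C N).
Local Notation dot := (@dotc C N).

Lemma split_l m n (a : 'I_m) : split (lshift n a) = inl a.
Proof. exact: (unsplitK (inl _ a)). Qed.
Lemma split_r m n (b : 'I_n) : split (rshift m b) = inr b.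
Proof. exact: (unsplitK (inr _ b)). Qed.

Lemma Jpair_nth l (Q : seq V) (e : size Q = l) (i : 'I_(l + l)) :
  Jpair (fun j : 'I_l => nth 0 Q j) i = nth 0 (Q ++ map J Q) i.
Proof.
rewrite /Jpair; case: split_ordP => [a ->|b ->].
  by rewrite nth_cat /= e ltn_ord.
by rewrite nth_cat /= e ltnNge leq_addr /= addKn (nth_map 0) // e.
Qed.

Definition inspan m (w : 'I_m -> V) x := exists d : 'I_m -> C, x = \sum_j d j *: w j.

Lemma inspan0 m (w : 'I_m -> V) : inspan w 0.
Proof. by exists (fun _ => 0); rewrite big1 // => j _; rewrite scale0r. Qed.
Lemma inspanD m (w : 'I_m -> V) x y : inspan w x -> inspan w y -> inspan w (x + y).
Proof.
move=> [d1 ->] [d2 ->]; exists (fun j => d1 j + d2 j).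
by rewrite -big_split /=; apply: eq_bigr => j _; rewrite scalerDl.
Qed.
Lemma inspanZ m (w : 'I_m -> V) c x : inspan w x -> inspan w (c *: x).
Proof.
move=> [d ->]; exists (fun j => c * d j).
by rewrite scaler_sumr; apply: eq_bigr => j _; rewrite scalerA.
Qed.
Lemma inspan_w m (w : 'I_m -> V) j : inspan w (w j).
Proof.
exists (fun k => (k == j)%:R); rewrite (bigD1 j) //= big1 ?eqxx ?scale1r ?addr0 //.
by move=> k /negPf ->; rewrite scale0r.
Qed.
Lemma inspan_sum m (w : 'I_m -> V) I (r : seq I) (F : I -> V) :
  (forall i, inspan w (F i)) -> inspan w (\sum_(i <- r) F i).
Proof.
move=> h; apply: (big_ind (inspan w)); [exact: inspan0|exact: inspanD|].
by move=> i _; exact: h.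
Qed.

Lemma spans_trans m m' (v : 'I_m -> V) (w : 'I_m' -> V) S :
  spans v S -> (forall i, inspan w (v i)) -> spans w S.
Proof.
move=> sv h x Sx; have [c ->] := sv x Sx.
apply: inspan_sum => i; exact/inspanZ/h.
Qed.

Lemma ii (t : C) : 'i^* * ('i * t) = t.
Proof. by rewrite conjCi mulNr mulrA mulCii mulN1r opprK. Qed.

Section Y.
Variable l : nat.
Variable v : 'I_(l + l) -> V.
Hypothesis ov : orthonormal_fam v.

Definition yv (i : 'I_(l + l)) : V :=
  match split i with
  | inl a => v (lshift l a) + v (rshift l a)
  | inr b => 'i *: (v (lshift l b) - v (rshift l b))
  end.

Lemma ydot i j : dot (yv i) (yv j) = 2%:R * (i == j)%:R.
Proof.
rewrite /yv; case: split_ordP => a ->; case: split_ordP => b ->;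
  rewrite ?dotcZl ?dotcZr ?ii !(dotcDl, dotcDr, dotcNl, dotcNr) !ov !eq_shift;
  case: eqP => _; rewrite /= ?mulr1n ?mulr0n ?oppr0 ?mulr0 ?mulr1 ?subrr ?addr0 ?add0r ?subr0 ?sub0r ?opprK ?mulr0 //; rewrite ?subrr ?addrN ?mulr0 //.
Qed.

Lemma yv_orth : orthogonal_fam yv /\ (forall i, yv i != 0).
Proof.
split => [i j nij|i]; first by rewrite ydot (negPf nij) mulr0.
apply/eqP => y0; have := ydot i i; rewrite y0 dotc0r eqxx mulr1 => /eqP.
by rewrite eq_sym pnatr_eq0.
Qed.

Hypothesis vJ : forall a, J (v (lshift l a)) = v (rshift l a).

Lemma yv_J i : J (yv i) = yv i.
Proof.
have vJ' a : J (v (rshift l a)) = v (lshift l a) by rewrite -vJ JK.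
rewrite /yv; case: split_ordP => a _.
  by rewrite JD vJ vJ' addrC.
by rewrite JZ JB vJ vJ' conjCi scaleNr -scalerN opprB.
Qed.

Lemma half_double (x : V) : 2^-1 *: (x + x) = x.
Proof.
rewrite -mulr2n -scaler_nat scalerA mulVf ?scale1r //.
by rewrite pnatr_eq0.
Qed.

Lemma v_inspan i : inspan yv (v i).
Proof.
have yl a : yv (lshift l a) = v (lshift l a) + v (rshift l a) by rewrite /yv split_l.
have yr a : yv (rshift l a) = 'i *: (v (lshift l a) - v (rshift l a)) by rewrite /yv split_r.
have ni : (- 'i) * 'i = 1 :> C by rewrite mulNr mulCii opprK.
case: (split_ordP i) => a ->.
  have -> : v (lshift l a) = 2^-1 *: (yv (lshift l a) + (- 'i) *: yv (rshift l a)).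
    rewrite yl yr scalerA ni scale1r addrACA subrr addr0.
    by rewrite half_double.
  by apply/inspanZ/inspanD; [exact: inspan_w | apply/inspanZ; exact: inspan_w].
have -> : v (rshift l a) = 2^-1 *: (yv (lshift l a) - (- 'i) *: yv (rshift l a)).
  rewrite yl yr scalerA ni scale1r opprB (addrC (v (lshift l a))) addrACA subrr addr0.
  by rewrite half_double.
apply/inspanZ/inspanD; first exact: inspan_w.
rewrite -scaleNr; apply/inspanZ; exact: inspan_w.
Qed.

End Y.
End Final.

Ltac perm_tac := apply/permP => ?; rewrite ?map_cons; repeat rewrite !(count_cat, count_cons'); rewrite ?addn0; lia.

Lemma kerperp (C : numClosedFieldType) (N : nat) (H : 'M[C]_(N + N)) :
  hermitian_mx H -> forall (u y : 'cV[C]_(N + N)) mu,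
  ominus H *m u = mu *: u -> mu != 0 -> ominus H *m y = 0 -> dotc u y = 0.
Proof.
move=> hH u y mu Au mu0 Ay.
have := Aherm hH u y; rewrite Au Ay dotcZl dotc0r => /eqP.
by rewrite mulf_eq0 conjC_eq0 (negPf mu0) /= => /eqP.
Qed.

Theorem main_gen (C : numClosedFieldType) (N : nat) (H : 'M[C]_(N + N)) :
  hermitian_mx H ->
  let Hm := ominus H in
  let K := in_ker Hm in
  [/\ (forall x, K x -> K (Jmap x)),
      (exists l : nat,
        [/\ \rank (kerc Hm) = (l + l)%N,
            (exists y : 'I_(l + l) -> 'cV[C]_(N + N),
               [/\ is_basis y K, orthogonal_fam y,
                   forall k, y k != 0 & forall k, Jmap (y k) = y k]) &
            (exists k' : 'I_l -> 'cV[C]_(N + N),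
               is_basis (Jpair k') K /\ orthonormal_fam (Jpair k'))]) &
      (exists x : 'I_N -> 'cV[C]_(N + N),
        [/\ is_basis (Jpair x) (fun _ => True),
            orthonormal_fam (Jpair x),
            (forall i, exists mu : C, Hm *m Jpair x i = mu *: Jpair x i) &
            (forall j, exists lam : C, lam <= 0 /\ Hm *m x j = lam *: x j)])].
Proof.
move=> hH Hm K.
have [Qn [Qk [I eN]]] := final_state hH.
have [o hn hk ho _] := I.
have szf : size (fam Qn Qk [::]) = (N + N)%N by rewrite size_fam /=; lia.
have KJ x : K x -> K (Jmap x) by rewrite /K /in_ker => Kx; rewrite ominus_J // Kx J0 oppr0.
split => //.
-
  set l := size Qk.
  pose k' := fun a : 'I_l => nth 0 Qk a.
  have oK : orth (Qk ++ map (@Jmap C N) Qk).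
    apply: orth_subseq o; rewrite /fam cats0 catA; exact: suffix_subseq.
  have szK : size (Qk ++ map (@Jmap C N) Qk) = (l + l)%N by rewrite size_cat size_map.
  have ovk : orthonormal_fam (Jpair k').
    by move=> i j; rewrite !(Jpair_nth (erefl l)); exact: (orth_fam szK oK).
  have inK i : K (Jpair k' i).
    rewrite (Jpair_nth (erefl l)); have := mem_nth 0 (_ : (i < size (Qk ++ map (@Jmap C N) Qk))%N).
    rewrite szK => /(_ (ltn_ord i)); rewrite mem_cat => /orP [u|/mapP [x xq ->]].
      exact: hk.
    by apply: KJ; apply: hk.
  have spanK : spans (Jpair k') K.
    move=> y Ky; exists (fun i => dotc (Jpair k' i) y).
    rewrite {1}(orth_expand o szf y) /fam cats0 !big_cat /=.
    rewrite big1_seq => [|u /andP [_ uq]]; last first.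
      have [lam lt Au] := hn u uq.
      by rewrite (kerperp hH Au (ltr0_neq0 lt) Ky) scale0r.
    rewrite big1_seq => [|u /andP [_ /mapP [x xq ->]]]; last first.
      have [lam lt Au] := hn x xq.
      rewrite (kerperp hH (AJeig hH Au) _ Ky) ?scale0r // oppr_eq0 conjC_eq0.
      exact: ltr0_neq0.
    rewrite !add0r -big_cat (big_nth 0) big_mkord szK.
    by apply: eq_bigr => i _; rewrite (Jpair_nth (erefl l)).
  have bK : is_basis (Jpair k') K.
    split => //; have [og nz] := orthon_orthog ovk; exact: orthog_indep.
  exists l; split.
  + pose Y : 'M[C]_(l + l, N + N) := \matrix_(i, j) Jpair k' i j 0.
    have Yu : Y \is unitarymx.
      apply/unitarymxP/matrixP => i j; rewrite !mxE eq_sym -ovk /dotc.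
      by apply: eq_bigr => k _; rewrite !mxE mulrC.
    have rowY i : (Jpair k' i)^T = row i Y by apply/rowP => j; rewrite !mxE.
    have s1 : (Y <= kerc Hm)%MS.
      apply/sub_kermxP/matrixP => i j; rewrite !mxE.
      have := congr1 (fun M : 'cV[C]_(N + N) => M j 0) (inK i); rewrite !mxE => E.
      by rewrite -[RHS]E; apply: eq_bigr => k _; rewrite [LHS]mulrC !mxE.
    have s2 : (kerc Hm <= Y)%MS.
      apply/row_subP => r; set w := row r (kerc Hm).
      have Kw : K w^T.
        have /sub_kermxP e : (w <= kermx Hm^T)%MS by exact: row_sub.
        by rewrite /K /in_ker -[Hm]trmxK -trmx_mul e trmx0.
      have [c e] := spanK _ Kw.
      rewrite -[w]trmxK e linear_sum /=; apply: summx_sub => t _.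
      by rewrite linearZ /= rowY; apply: scalemx_sub; exact: row_sub.
    transitivity (\rank Y); last exact: mxrank_unitary Yu.
    apply/esym/eqmx_rank.
    by rewrite s1 s2.
  + have vJ a : Jmap (Jpair k' (lshift l a)) = Jpair k' (rshift l a).
      by rewrite /Jpair split_l split_r.
    exists (yv (Jpair k')); have [og nz] := yv_orth ovk; split => //.
    * split => //.
      - move=> i; rewrite /yv; case: split_ordP => a _.
          by rewrite /K /in_ker mulmxDr !inK addr0.
        by rewrite /K /in_ker -scalemxAr mulmxBr !inK subr0 scaler0.
      - exact: orthog_indep.
      - apply: (spans_trans spanK); exact: v_inspan.
    * exact: yv_J.
  + by exists k'.
-
  set Q := Qn ++ Qk.
  have sQ : size Q = N by rewrite size_cat.
  have pf : perm_eq (fam Qn Qk [::]) (Q ++ map (@Jmap C N) Q).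
    rewrite /fam /Q map_cat; perm_tac.
  have oQ : orth (Q ++ map (@Jmap C N) Q) := orth_perm pf o.
  have szQ : size (Q ++ map (@Jmap C N) Q) = (N + N)%N by rewrite size_cat size_map sQ.
  pose x := fun j : 'I_N => nth 0 Q j.
  have ovx : orthonormal_fam (Jpair x).
    by move=> i j; rewrite !(Jpair_nth sQ); exact: (orth_fam szQ oQ).
  exists x; split => //.
  + split => //.
    * have [og nz] := orthon_orthog ovx; exact: orthog_indep.
    * move=> y _; exists (fun i => dotc (Jpair x i) y); exact: ortho_expand.
  + move=> i; apply: (fam_eig hH I); rewrite (perm_mem pf) (Jpair_nth sQ) mem_nth //.
    by rewrite szQ.
  + move=> j; have : x j \in Q by rewrite mem_nth // sQ.
    rewrite mem_cat => /orP [u|u].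
      by have [lam lt E] := hn _ u; exists lam; split => //; exact: ltW.
    by exists 0; split => //; rewrite scale0r hk.
Qed.

Unset Implicit Arguments.
Local Open Scope complex_scope.
Theorem mainTheorem8 (R : realType) (N : nat) (H : 'M[R[i]]_(N + N)) :
  hermitian_mx H ->
  let Hm := ominus H in
  let K := in_ker Hm in
  [/\ (* K is J-invariant *)
      (forall x, K x -> K (Jmap x)),
      (* dim K = 2l, with an orthogonal basis of nonzero J-fixed vectors and
         an orthonormal basis {k'_1..k'_l, J k'_1 .. J k'_l} *)
      (exists l : nat,
        [/\ \rank (kerc Hm) = (l + l)%N,
            (exists y : 'I_(l + l) -> 'cV[R[i]]_(N + N),
               [/\ is_basis y K, orthogonal_fam y,
                   forall k, y k != 0 & forall k, Jmap (y k) = y k]) &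
            (exists k' : 'I_l -> 'cV[R[i]]_(N + N),
               is_basis (Jpair k') K /\ orthonormal_fam (Jpair k'))]) &
      (* orthonormal eigenbasis {x_1..x_N, J x_1 .. J x_N} of C^{2N} for Hm,
         with every x_j having eigenvalue <= 0 *)
      (exists x : 'I_N -> 'cV[R[i]]_(N + N),
        [/\ is_basis (Jpair x) (fun _ => True),
            orthonormal_fam (Jpair x),
            (forall i, exists mu : R[i], Hm *m Jpair x i = mu *: Jpair x i) &
            (forall j, exists lam : R[i], lam <= 0 /\ Hm *m x j = lam *: x j)])].
Proof. move=> hH; exact: (@main_gen _ N H hH). Qed.
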